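(* For all integers $d\ge 2$, $g\ge 1$ and $t\ge 4$ there exist positive integers $m,n$ with $n/m\ge t$ and a simple graph $G'$ of girth at least $g$ whose vertex set is partitioned into sets $A$ and $B$ with $|A|=m$ and $|B|=n$, such that every edge of $G'$ joins a vertex of $A$ to a vertex of $B$ and every vertex of $B$ has degree at least $d$ in $G'$.
   Context: The girth of a graph is the length of its shortest cycle (infinite for a forest). *)

(* Defs.v *)
From mathcomp Require Import all_boot.
Set Implicit Arguments. Unset Strict Implicit. Unset Printing Implicit Defensive.

Definition simple_graph (V : finType) (e : rel V) : Prop :=
  symmetric e /\ irreflexive e.

Definition is_graph_cycle (V : finType) (e : rel V) (c : seq V) : bool :=
  [&& 3 <= size c, uniq c & cycle e c].

(* girth >= g : every cycle has length at least g (true for forests,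
   whose girth is infinite). *)
Definition girth_ge (V : finType) (e : rel V) (g : nat) : Prop :=
  forall c : seq V, is_graph_cycle e c -> g <= size c.

Definition deg (V : finType) (e : rel V) (v : V) : nat := #|[set w | e v w]|.

(* Main.v *)
Require Import Defs.
From mathcomp Require Import all_boot.
From mathcomp Require Import zify.
Set Implicit Arguments. Unset Strict Implicit. Unset Printing Implicit Defensive.

Section Ball.
Variables (V : finType) (e : rel V).

Definition nbr (S : {set V}) := S :|: \bigcup_(v in S) [set u | e v u].
Definition ball c j := iter j nbr [set c].

Lemma ballS c j : ball c j.+1 = nbr (ball c j).
Proof. by rewrite /ball iterS. Qed.

Lemma ball_mono c j k : j <= k -> ball c j \subset ball c k.
Proof.
elim: k => [|k IH]; first by rewrite leqn0 => /eqP ->.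
rewrite leq_eqVlt => /orP[/eqP -> //| ]; rewrite ltnS => /IH H.
by apply: subset_trans H _; rewrite ballS subsetUl.
Qed.

Lemma card_bigcup_le (S : {set V}) (F : V -> {set V}) :
  #|\bigcup_(v in S) F v| <= \sum_(v in S) #|F v|.
Proof.
elim/big_rec2: _ => [|i X n _ h]; first by rewrite cards0.
by rewrite cardsU; apply: leq_trans (leq_subr _ _) _; apply: leq_add.
Qed.

Lemma ball_card D (hD : forall v, deg e v <= D) c j : #|ball c j| <= (D.+1) ^ j.
Proof.
elim: j => [|j IH]; first by rewrite /ball /= cards1.
rewrite ballS /nbr cardsU; apply: leq_trans (leq_subr _ _) _.
apply: leq_trans; first (apply: leq_add; [exact: leqnn | exact: card_bigcup_le]).
apply: leq_trans; first (apply: leq_add; [exact: leqnn | apply: leq_sum => v _; exact: hD]).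
rewrite sum_nat_const expnSr.
have -> : #|ball c j| + #|ball c j| * D = #|ball c j| * D.+1 by rewrite mulnS.
by apply: leq_mul.
Qed.

Lemma path_ball_fwd c s : path e c s -> last c s \in ball c (size s).
Proof.
elim/last_ind: s => [|s z IH]; first by rewrite /= /ball /= set11.
rewrite rcons_path => /andP[p ez]; rewrite last_rcons size_rcons ballS /nbr.
apply/setUP; right; apply/bigcupP; exists (last c s); first exact: IH.
by rewrite inE.
Qed.

Hypothesis sym : symmetric e.

Lemma path_ball_bwd u s : path e u s -> u \in ball (last u s) (size s).
Proof.
elim: s u => [|v s IH] u /=; first by rewrite /ball /= set11.
move=> /andP[euv p]; rewrite /nbr; apply/setUP; right.
apply/bigcupP; exists v; first exact: IH.
by rewrite inE sym.
Qed.
End Ball.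

Section Girth.
Variables (V : finType) (e e' : rel V) (x y : V) (G : nat).
Hypothesis he' : forall u v, e' u v -> [|| e u v, (u == x) && (v == y) | (u == y) && (v == x)].

Lemma old_path u q w : all (fun z => (z != x) && (z != y)) q -> q != [::] ->
  path e' u (rcons q w) -> path e u (rcons q w).
Proof.
elim: q u => [|z q IH] u //= /andP[/andP[zx zy] aq] _ /andP[euz p].
apply/andP; split.
  by move: (he' euz); rewrite (negbTE zx) (negbTE zy) ?andbF ?orbF.
case: q IH aq p => [|z' q] IH aq p /=.
  by move: p => /= /andP[ezw _]; rewrite andbT; move: (he' ezw); rewrite (negbTE zx) (negbTE zy) /= ?andbF ?orbF.
exact: IH.
Qed.

Lemma girth_add : x != y -> girth_ge e G ->
 (forall s, path e x s -> last x s = y -> G <= (size s).+1) ->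
 (forall s, path e y s -> last y s = x -> G <= (size s).+1) ->
 girth_ge e' G.
Proof.
move=> nxy gG H1 H2 c /and3P[sz uq cy].
case: (boolP ((x \in c) && (y \in c))) => [/andP[xc yc] | nb]; last first.
  apply: gG; rewrite /is_graph_cycle sz uq /=.
  case: (boolP (x \in c)) => xc.
    have yc : y \notin c by move: nb; rewrite xc.
    apply: (sub_in_cycle (P := fun z => z != y)) cy; last by apply/allP => z zc; apply: contraNneq yc => <-.
    move=> u v /= uy vy /he'; rewrite (negbTE uy) (negbTE vy) /= ?andbF ?orbF //.
  apply: (sub_in_cycle (P := fun z => z != x)) cy; last by apply/allP => z zc; apply: contraNneq xc => <-.
  move=> u v /= ux vx /he'; rewrite (negbTE ux) (negbTE vx) /= ?andbF ?orbF //.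
case: (rot_to xc) => i p def.
have : uniq (x :: p) by rewrite -def rot_uniq.
have : cycle e' (x :: p) by rewrite -def rot_cycle.
have -> : size c = size (x :: p) by rewrite -def size_rot.
have szc : 3 <= size (x :: p) by rewrite -def size_rot.
have : y \in p.
  move: yc; rewrite -(mem_rot i) def inE => /orP[/eqP yx|//]; by rewrite yx eqxx in nxy.
clear def => yp; move: szc; case/splitPr: p / yp => p1 p2 szc.
rewrite /= rcons_cat /= cat_path /= => /and3P[pa eb pb].
move=> /andP[U1 U2].
move: U1; rewrite mem_cat inE !negb_or => /and3P[xp1 _ xp2].
move: U2; rewrite cat_uniq /= negb_or => /and4P[_ /andP[yp1 _] yp2 _].
rewrite size_cat /=.
case: p2 szc pb xp2 yp2 => [|z p2] szc pb xp2 yp2.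
  have hp1 : p1 != [::].
    by move: szc; rewrite /= size_cat /= addn1; case: p1 {pa eb xp1 yp1}.
  have : path e x (rcons p1 y).
    apply: old_path => //; last by rewrite rcons_path pa.
    apply/allP => z zp; apply/andP; split; [by apply: contraNneq xp1 => <- | by apply: contraNneq yp1 => <-].
  move/H1; rewrite last_rcons size_rcons => /(_ erefl) h.
  by rewrite /= addn1.
have : path e y (rcons (z :: p2) x).
  apply: old_path => //; apply/allP => w wp; apply/andP; split;
    [by apply: contraNneq xp2 => <- | by apply: contraNneq yp2 => <-].
move/H2; rewrite last_rcons size_rcons => /(_ erefl) h.
by apply: leq_trans h _; rewrite /= ltnS leq_addl.
Qed.
End Girth.

Section Constr.
Variables (m n : nat).
Implicit Types (E : {set 'I_m * 'I_n}).

Definition erel E : rel ('I_m + 'I_n) := fun u v =>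
  match u, v with
  | inl a, inr b => (a, b) \in E
  | inr b, inl a => (a, b) \in E
  | _, _ => false
  end.

Lemma erel_sym E : symmetric (erel E).
Proof. by case=> [a|b] [a'|b']. Qed.

Lemma erel_irr E : irreflexive (erel E).
Proof. by case. Qed.

Definition dA E a := #|[set b | (a, b) \in E]|.
Definition dB E b := #|[set a | (a, b) \in E]|.

Lemma degL E a : deg (erel E) (inl a) = dA E a.
Proof.
rewrite /deg /dA -(card_imset _ (@inr_inj 'I_m 'I_n)); apply: eq_card => w.
case: w => [a'|b]; rewrite !inE /=.
  by apply/esym/imsetP => -[b _].
by rewrite mem_imset ?inE //; exact: inr_inj.
Qed.

Lemma degR E b : deg (erel E) (inr b) = dB E b.
Proof.
rewrite /deg /dB -(card_imset _ (@inl_inj 'I_m 'I_n)); apply: eq_card => w.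
case: w => [a|b']; rewrite !inE /=.
  by rewrite mem_imset ?inE //; exact: inl_inj.
by apply/esym/imsetP => -[a _].
Qed.

Lemma card_as_sum (T : finType) (P : pred T) : #|[set x | P x]| = \sum_x (P x : nat).
Proof.
rewrite -sum1_card big_mkcond /=; apply: eq_bigr => x _; rewrite inE.
by case: (P x).
Qed.

Lemma sumA E : \sum_a dA E a = #|E|.
Proof.
have -> : #|E| = #|[set p | p \in E]| by apply: eq_card => p; rewrite inE.
rewrite card_as_sum.
transitivity (\sum_a \sum_b (((a, b) \in E) : nat)).
  by apply: eq_bigr => a _; rewrite /dA card_as_sum.
by rewrite pair_big /=; apply: eq_bigr => -[a b].
Qed.

Lemma sumB E : \sum_b dB E b = #|E|.
Proof.
rewrite -sumA /dA /dB.
under eq_bigr do rewrite card_as_sum.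
rewrite exchange_big /=; apply: eq_bigr => a _.
by rewrite card_as_sum.
Qed.

Lemma dA_add E a0 b0 a : dA ((a0, b0) |: E) a <= dA E a + (a == a0).
Proof.
rewrite /dA; case: eqP => [->|ne].
  apply: leq_trans (subset_leq_card (_ : _ \subset b0 |: [set b | (a0, b) \in E])) _.
    by apply/subsetP => b; rewrite !inE xpair_eqE eqxx /= => /orP[->|->]; rewrite ?orbT.
  by rewrite cardsU1 addnC leq_add2l leq_b1.
rewrite addn0; apply: subset_leq_card; apply/subsetP => b.
by rewrite !inE xpair_eqE => /orP[/andP[/eqP //]|].
Qed.

Lemma dB_add E a0 b0 b : dB ((a0, b0) |: E) b <= dB E b + (b == b0).
Proof.
rewrite /dB; case: eqP => [->|ne].
  apply: leq_trans (subset_leq_card (_ : _ \subset a0 |: [set a | (a, b0) \in E])) _.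
    by apply/subsetP => a; rewrite !inE xpair_eqE eqxx andbT => /orP[->|->]; rewrite ?orbT.
  by rewrite cardsU1 addnC leq_add2l leq_b1.
rewrite addn0; apply: subset_leq_card; apply/subsetP => a.
by rewrite !inE xpair_eqE => /orP[/andP[_ /eqP]|].
Qed.

Variables (d D G : nat).
Hypotheses (hdD : d <= D) (hD : 0 < D) (hG : 3 <= G)
  (hm : d * n + D * ((D.+1) ^ G).+1 <= D * m).

Definition valid E := [/\ forall a, dA E a <= D, forall b, dB E b <= d
  & girth_ge (erel E) G].

Lemma valid_deg E : valid E -> forall v, deg (erel E) v <= D.
Proof.
case=> hA hB _ [a|b]; first by rewrite degL.
by rewrite degR (leq_trans (hB b)).
Qed.

Lemma step E b0 : valid E -> dB E b0 < d ->
  exists E', valid E' /\ #|E'| = #|E|.+1.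
Proof.
move=> vE hb0; have [hA hB gE] := vE.
set e := erel E.
set S := ball e (inr b0) G.
set F := [set a | dA E a < D].
set Fr := [set a | inl a \notin S].
have : F :&: Fr != set0.
  apply/negP => /eqP h0.
  have c1 : #|~: Fr| <= (D.+1) ^ G.
    apply: leq_trans (_ : #|S| <= _); last exact: ball_card (valid_deg vE) _ _.
    rewrite -(card_imset _ (@inl_inj 'I_m 'I_n)); apply: subset_leq_card.
    by apply/subsetP => w /imsetP[a]; rewrite !inE negbK => ? ->.
  have c2 : #|~: F| * D <= d * n.
    apply: leq_trans (_ : \sum_a dA E a <= _).
      rewrite -sum_nat_const big_mkcond /=; apply: leq_sum => a _.
      by case: ifP => //; rewrite !inE -leqNgt.
    rewrite sumA -sumB.
    apply: leq_trans (_ : \sum_(b : 'I_n) d <= _); first by apply: leq_sum => b _.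
    by rewrite sum_nat_const card_ord mulnC.
  have c3 : m <= #|~: F| + #|~: Fr|.
    have : #|[set: 'I_m]| <= #|~: F :|: ~: Fr|.
      apply: subset_leq_card; apply/subsetP => a _.
      by rewrite in_setU !in_setC -negb_and -in_setI h0 in_set0.
    rewrite cardsT card_ord cardsU => h; apply: (leq_trans h); exact: leq_subr.
  move: c1 c2 c3 hm; set K := _ ^ G; set x := #|~: F|; set y := #|~: Fr|.
  move=> c1 c2 c3 hm'.
  have c4 : D * m <= D * (x + K) by rewrite leq_mul2l (leq_trans c3) ?orbT // leq_add2l.
  move: c4; rewrite mulnDr (mulnC D x); lia.
case/set0Pn => a0; rewrite !inE => /andP[ha0 hf].
have farG : forall k, k <= G -> inl a0 \notin ball e (inr b0) k.
  by move=> k hk; apply: contra hf; apply/subsetP/ball_mono.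
have nE : (a0, b0) \notin E.
  apply/negP => hin; have := farG 1 (leq_trans _ hG).
  have : path e (inr b0) [:: inl a0] by rewrite /= andbT.
  move/path_ball_fwd => /= h1 h2; move: (h2 erefl); by rewrite h1.
exists ((a0, b0) |: E); split; last by rewrite cardsU1 nE.
split.
- move=> a; apply: leq_trans (dA_add _ _ _ _) _.
  case: eqP => [->|_]; first by rewrite addn1.
  by rewrite addn0.
- move=> b; apply: leq_trans (dB_add _ _ _ _) _.
  case: eqP => [->|_]; first by rewrite addn1.
  by rewrite addn0.
apply: (girth_add (e := e) (x := inr b0) (y := inl a0)) => //.
- case=> [a|b] [a'|b'] //=; rewrite !inE xpair_eqE.
    case/orP=> [/andP[/eqP -> /eqP ->]|->]; rewrite ?eqxx ?orbT ?orTb //.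
  by case/orP=> [/andP[/eqP -> /eqP ->]|->]; rewrite ?eqxx ?orbT ?orTb.
- move=> s /path_ball_fwd hs hl; rewrite hl in hs; rewrite leqNgt; apply/negP => hlt.
  by move: (farG _ (ltnW (ltnW hlt))); rewrite hs.
- move=> s /(path_ball_bwd (@erel_sym E)) hs hl; rewrite hl in hs; rewrite leqNgt; apply/negP => hlt.
  by move: (farG _ (ltnW (ltnW hlt))); rewrite hs.
Qed.
End Constr.

Section Iter.
Variables (m n d D G : nat).
Hypotheses (hdD : d <= D) (hD : 0 < D) (hG : 3 <= G)
  (hm : d * n + D * ((D.+1) ^ G).+1 <= D * m).

Lemma iter_valid k : exists E : {set 'I_m * 'I_n},
  valid d D G E /\ (k <= #|E| \/ forall b, d <= dB E b).
Proof.
elim: k => [|k [E [vE H]]].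
  exists set0; split; last by left.
  have e0 : forall u v, erel (set0 : {set 'I_m * 'I_n}) u v = false.
    by case=> ? [] ? /=; rewrite ?in_set0.
  split.
  - by move=> a; rewrite /dA (_ : [set b | _] = set0) ?cards0 //; apply/setP => b; rewrite !inE.
  - by move=> b; rewrite /dB (_ : [set a | _] = set0) ?cards0 //; apply/setP => a; rewrite !inE.
  move=> c /and3P[sz _ cy]; move: sz cy; case: c => [|x [|y p]] //= _; by rewrite e0.
case: (boolP [exists b, dB E b < d]) => [/existsP[b hb] | hall].
  case: H => [hk|hall]; last by move: (hall b); rewrite leqNgt hb.
  have [E' [vE' hc]] := step hdD hD hG hm vE hb.
  by exists E'; split => //; left; rewrite hc ltnS.
exists E; split => //; right => b.
by move: hall; rewrite negb_exists => /forallP /(_ b); rewrite -leqNgt.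
Qed.

Lemma exists_full : exists E : {set 'I_m * 'I_n},
  valid d D G E /\ forall b, d <= dB E b.
Proof.
have [E [vE [hk|hall]]] := iter_valid (d * n).+1; last by exists E.
exfalso; have [_ hB _] := vE.
move: hk; rewrite -sumB.
have : \sum_(b : 'I_n) dB E b <= \sum_(b : 'I_n) d by apply: leq_sum => b _.
rewrite sum_nat_const card_ord mulnC => h1 h2.
by move: (leq_trans h2 h1); rewrite ltnn.
Qed.
End Iter.

Theorem lemma5p10 (d g t : nat) (hd : 2 <= d) (hg : 1 <= g) (ht : 4 <= t) :
  exists (m n : nat), [/\ 0 < m, 0 < n & t * m <= n] /\
  exists (V : finType) (e : rel V) (A B : {set V}),
    [/\ simple_graph e, girth_ge e g,
        A :&: B = set0 /\ A :|: B = [set: V],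
        #|A| = m /\ #|B| = n
      & (forall x y, e x y -> (x \in A) && (y \in B) || (x \in B) && (y \in A))
        /\ (forall v, v \in B -> d <= deg e v)].
Proof.
set D := 2 * d * t; set G := g + 2; set K := (D.+1) ^ G.
have hK : 0 < K by rewrite expn_gt0.
set m := 4 * K; set n := t * m.
have hdD : d <= D by rewrite /D; nia.
have hD : 0 < D by rewrite /D; nia.
have hG : 3 <= G by rewrite /G; lia.
have hm : d * n + D * K.+1 <= D * m by rewrite /n /m /D; nia.
have [E [[hA hB gE] hfull]] := exists_full hdD hD hG hm.
exists m, n; split; first by split => //; rewrite /n /m; nia.
set A := [set x : ('I_m + 'I_n)%type | if x is inl _ then true else false].
exists ('I_m + 'I_n)%type, (erel E), A, (~: A); split.
- by split; [exact: erel_sym | exact: erel_irr].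
- by move=> c hc; apply: leq_trans (gE c hc); rewrite /G leq_addr.
- by rewrite setICr setUCr.
- have cA : #|A| = m.
    transitivity #|[set: 'I_m]|; last by rewrite cardsT card_ord.
    rewrite -(card_imset _ (@inl_inj 'I_m 'I_n)); apply: eq_card => x.
    case: x => [a|b]; rewrite !inE.
      by rewrite mem_imset ?inE //; exact: inl_inj.
    by apply/esym/imsetP => -[a _].
  split => //; have := cardsC A; rewrite card_sum !card_ord cA => /eqP.
  by rewrite eqn_add2l => /eqP.
split.
  by case=> [a|b] [a'|b'] //= _; rewrite !inE.
by case=> [a|b]; rewrite !inE //= => _; rewrite degR.
Qed.
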